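(* The alternating-minimization initialization algorithm described in the context generates objective values for the representation-aware $k$-means clustering problem that are monotonically non-increasing over the outer iterations $l \geq 2$, and it terminates after a finite number of iterations.
   Context: Data $\mathcal{D}=\{x^t\in\mathbb{R}^D\}_{t=1}^N$ are to be partitioned into $K$ clusters $C_1,\dots,C_K$ with binary assignment variables $z_{tk}$ (each point assigned to exactly one cluster, $\sum_k z_{tk}=1$) and cluster-usage binaries $u_k$, subject to cardinality constraints $N_{\min}u_k\le\sum_t z_{tk}\le N_{\max}u_k$. For each pair of clusters $i<j$, an interpretable separating hyperplane $(w^{ij},b^{ij})$ is found by the integer program: minimize $\sum_{t\in C_i\cup C_j}\xi_t$ subject to $(w^{ij})^Tx^t+b^{ij}\ge-\xi_t$ for $x^t\in C_i$, $(w^{ij})^Tx^t+b^{ij}+\epsilon\le\xi_t$ for $x^t\in C_j$, $\xi_t\ge 0$, with $w^{ij}=w^{ij}_+-w^{ij}_-$ integer, $w^{ij}_\pm\in\mathbb{Z}^D_{\ge0}$, $\sum_d (w^{ij}_{d,+}+w^{ij}_{d,-})\ge1$, binaries $y^{ij}_{d,\pm}$ with $y^{ij}_{d,+}+y^{ij}_{d,-}\le1$, $\sum_d(y^{ij}_{d,+}+y^{ij}_{d,-})\le\beta$, and $0\le w^{ij}_{d,\pm}\le M y^{ij}_{d,\pm}$ (here $M>1$ is the maximum integer coefficient, $\beta$ a sparsity bound, $\epsilon>0$ a fixed separation constant). Given hyperplanes, representation errors for every point are $(\xi^{ij}_+)_t$ (error if $t$ is assigned to cluster $i$) and $(\xi^{ij}_-)_t$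 (error if assigned to cluster $j$). The representation-aware $k$-means problem is: minimize $\sum_{k=1}^K\sum_{t}z_{tk}\|x^t-c_k\|^2+\lambda\sum_t\sum_{i=1}^{K-1}\sum_{j=i+1}^K\big(z_{ti}(\xi^{ij}_+)_t+z_{tj}(\xi^{ij}_-)_t\big)$ over $z$, centers $c_k$, and $u_k$, subject to the assignment and cardinality constraints, with $\lambda\ge0$. The initialization algorithm: set all $\xi=0$; initialize $z,c_k$ by standard $k$-means; then for outer iterations $l=1,2,\dots$: (a) repeatedly fix $c_k$ and solve the representation-aware $k$-means problem for $z$, then set $c_k=\frac{1}{N_k}\sum_t z_{tk}x^t$ with $N_k=\sum_t z_{tk}$, until convergence; (b) set $C_i=\{x^t:z_{ti}=1\}$ and for every pair $i<j$ solve the separating-hyperplane IP for $(w^{ij},b^{ij})$ and update $(\xi^{ij}_+)_t=\max(-(w^{ij})^Tx^t+b^{ij},0)$ and $(\xi^{ij}_-)_t=\max((w^{ij})^Tx^t+b^{ij}+\epsilon,0)$ for all $t$; the algorithm stops when the objective value no longer changes. *)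

(* Defs.v *)
(* R : realType, indices 'I_N (points), 'I_D (features),
   'I_K (clusters). *)
From HB Require Import structures.
From mathcomp Require Import all_boot all_order all_algebra.
From mathcomp Require Import reals.
From Stdlib Require Import Relations.
Set Implicit Arguments. Unset Strict Implicit. Unset Printing Implicit Defensive.
Import Order.TTheory GRing.Theory Num.Theory.
Local Open Scope ring_scope.

Section RepKMeans.
Context {R : realType} {N D K : nat}.

(* Data x^t, cluster-size bounds, lambda, epsilon, max coefficient M,
   sparsity bound beta. *)
Variables (x : 'I_N -> 'rV[R]_D) (Nmin Nmax : nat) (lam eps : R) (M beta : nat).

Definition sqn (v : 'rV[R]_D) : R := \sum_(d < D) v 0 d ^+ 2.

(* An assignment z : 'I_N -> 'I_K encodes binaries z_tk := (z t == k),
   which is exactly "each point assigned to exactly one cluster". *)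
Definition csize (z : 'I_N -> 'I_K) (k : 'I_K) : nat := #|[set t | z t == k]|.

(* cardinality constraints with cluster-usage binaries u_k *)
Definition feasible_z (z : 'I_N -> 'I_K) : Prop :=
  exists u : 'I_K -> bool, forall k,
    (Nmin * u k <= csize z k <= Nmax * u k)%N.

(* representation-aware k-means objective; xp i j t = (xi^{ij}_+)_t,
   xm i j t = (xi^{ij}_-)_t *)
Definition obj (z : 'I_N -> 'I_K) (c : 'I_K -> 'rV[R]_D)
    (xp xm : 'I_K -> 'I_K -> 'I_N -> R) : R :=
  \sum_(k < K) \sum_(t < N) (z t == k)%:R * sqn (x t - c k)
  + lam * \sum_(t < N) \sum_(i < K) \sum_(j < K | (i < j)%N)
      ((z t == i)%:R * xp i j t + (z t == j)%:R * xm i j t).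

Definition z_optimal (c : 'I_K -> 'rV[R]_D) (xp xm : 'I_K -> 'I_K -> 'I_N -> R)
    (z : 'I_N -> 'I_K) : Prop :=
  feasible_z z /\
  forall z', feasible_z z' -> obj z c xp xm <= obj z' c xp xm.

Definition centroid (z : 'I_N -> 'I_K) (k : 'I_K) : 'rV[R]_D :=
  (csize z k)%:R^-1 *: \sum_(t < N | z t == k) x t.

(* A candidate solution of the separating-hyperplane integer program:
   w_+ , w_- (nonneg. integers), y_+, y_- (binaries), b, and slacks xi. *)
Record hsol := HSol {
  h_wp : 'I_D -> nat; h_wm : 'I_D -> nat;
  h_yp : 'I_D -> bool; h_ym : 'I_D -> bool;
  h_b : R; h_xi : 'I_N -> R }.

Definition hw (h : hsol) (d : 'I_D) : R := (h_wp h d)%:R - (h_wm h d)%:R.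
Definition lin (h : hsol) (v : 'rV[R]_D) : R := \sum_(d < D) hw h d * v 0 d.

Definition sep_feasible (Ci Cj : pred 'I_N) (h : hsol) : Prop :=
  (forall t, Ci t -> - h_xi h t <= lin h (x t) + h_b h) /\
  (forall t, Cj t -> lin h (x t) + h_b h + eps <= h_xi h t) /\
  (forall t, Ci t || Cj t -> 0 <= h_xi h t) /\
  (forall d, (h_yp h d + h_ym h d <= 1)%N) /\
  (\sum_(d < D) (h_yp h d + h_ym h d) <= beta)%N /\
  (forall d, (h_wp h d <= M * h_yp h d)%N /\ (h_wm h d <= M * h_ym h d)%N) /\
  (1 <= \sum_(d < D) (h_wp h d + h_wm h d))%N.

Definition sep_obj (Ci Cj : pred 'I_N) (h : hsol) : R :=
  \sum_(t < N | Ci t || Cj t) h_xi h t.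

Definition sep_optimal (Ci Cj : pred 'I_N) (h : hsol) : Prop :=
  sep_feasible Ci Cj h /\
  forall h', sep_feasible Ci Cj h' -> sep_obj Ci Cj h <= sep_obj Ci Cj h'.

Definition cluster (z : 'I_N -> 'I_K) (i : 'I_K) : pred 'I_N := fun t => z t == i.

Definition new_xp (H : 'I_K -> 'I_K -> hsol) (i j : 'I_K) (t : 'I_N) : R :=
  Num.max (- (lin (H i j) (x t) + h_b (H i j))) 0.
Definition new_xm (H : 'I_K -> 'I_K -> hsol) (i j : 'I_K) (t : 'I_N) : R :=
  Num.max (lin (H i j) (x t) + h_b (H i j) + eps) 0.

(* PhInner: inside the inner loop (a);
   PhHyper: about to perform step (b); PhDone: stopped.
   st_hist records the objective values f_1, f_2, ... of the
   representation-aware k-means problem obtained at the end of step (a) of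
   each outer iteration l = 1, 2, ... *)
Inductive phase := PhInner | PhHyper | PhDone.

Record astate := AState {
  st_z : 'I_N -> 'I_K; st_c : 'I_K -> 'rV[R]_D;
  st_xp : 'I_K -> 'I_K -> 'I_N -> R; st_xm : 'I_K -> 'I_K -> 'I_N -> R;
  st_hist : seq R; st_phase : phase }.

Definition init_state (z0 : 'I_N -> 'I_K) (c0 : 'I_K -> 'rV[R]_D) : astate :=
  AState z0 c0 (fun _ _ _ => 0) (fun _ _ _ => 0) [::] PhInner.

(* One step of the algorithm (any optimal solution may be chosen). *)
Inductive step : astate -> astate -> Prop :=
  (* inner loop, not yet converged: objective changed *)
  | step_inner (s : astate) (z' : 'I_N -> 'I_K) :
      st_phase s = PhInner ->
      z_optimal (st_c s) (st_xp s) (st_xm s) z' ->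
      obj z' (centroid z') (st_xp s) (st_xm s)
        <> obj (st_z s) (st_c s) (st_xp s) (st_xm s) ->
      step s (AState z' (centroid z') (st_xp s) (st_xm s) (st_hist s) PhInner)
  (* inner loop converged, outer objective value unchanged: stop *)
  | step_stop (s : astate) (z' : 'I_N -> 'I_K) :
      st_phase s = PhInner ->
      z_optimal (st_c s) (st_xp s) (st_xm s) z' ->
      obj z' (centroid z') (st_xp s) (st_xm s)
        = obj (st_z s) (st_c s) (st_xp s) (st_xm s) ->
      st_hist s <> [::] ->
      last 0 (st_hist s) = obj z' (centroid z') (st_xp s) (st_xm s) ->
      step s (AState z' (centroid z') (st_xp s) (st_xm s)
                (rcons (st_hist s) (obj z' (centroid z') (st_xp s) (st_xm s)))
                PhDone)
  (* inner loop converged, outer objective value changed: go to step (b) *)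
  | step_go (s : astate) (z' : 'I_N -> 'I_K) :
      st_phase s = PhInner ->
      z_optimal (st_c s) (st_xp s) (st_xm s) z' ->
      obj z' (centroid z') (st_xp s) (st_xm s)
        = obj (st_z s) (st_c s) (st_xp s) (st_xm s) ->
      ~ (st_hist s <> [::] /\
         last 0 (st_hist s) = obj z' (centroid z') (st_xp s) (st_xm s)) ->
      step s (AState z' (centroid z') (st_xp s) (st_xm s)
                (rcons (st_hist s) (obj z' (centroid z') (st_xp s) (st_xm s)))
                PhHyper)
  (* step (b): optimal separating hyperplanes for every pair i < j *)
  | step_hyper (s : astate) (H : 'I_K -> 'I_K -> hsol) :
      st_phase s = PhHyper ->
      (forall i j : 'I_K, (i < j)%N ->
         sep_optimal (cluster (st_z s) i) (cluster (st_z s) j) (H i j)) ->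
      step s (AState (st_z s) (st_c s) (new_xp H) (new_xm H) (st_hist s) PhInner).

End RepKMeans.

(* Main.v *)
Require Import Defs.
From HB Require Import structures.
From mathcomp Require Import all_boot all_order all_algebra.
From mathcomp Require Import reals ring lra zify.
From Stdlib Require Import ClassicalEpsilon FunctionalExtensionality.
From Stdlib Require Import Relations.
Import Order.TTheory GRing.Theory Num.Theory.
Local Open Scope ring_scope.


Definition sok {R : realType} {N D : nat} (M beta : nat) (h : @hsol R N D) : Prop :=
  (forall d, (h_yp h d + h_ym h d <= 1)%N) /\
  (\sum_(d < D) (h_yp h d + h_ym h d) <= beta)%N /\
  (forall d, (h_wp h d <= M * h_yp h d)%N /\ (h_wm h d <= M * h_ym h d)%N) /\
  (1 <= \sum_(d < D) (h_wp h d + h_wm h d))%N.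

Definition tighten {R : realType} {N D : nat} (x : 'I_N -> 'rV[R]_D) (eps : R)
   (Ci : pred 'I_N) (h : @hsol R N D) : @hsol R N D :=
  HSol (h_wp h) (h_wm h) (h_yp h) (h_ym h) (h_b h)
    (fun t => if Ci t then Num.max (- (lin h (x t) + h_b h)) 0
              else Num.max (lin h (x t) + h_b h + eps) 0).

Definition pv {R : realType} {N D : nat} (x : 'I_N -> 'rV[R]_D) (eps : R)
   (Ci Cj : pred 'I_N) (h : @hsol R N D) : R :=
  \sum_(t < N) ((Ci t)%:R * Num.max (- (lin h (x t) + h_b h)) 0
              + (Cj t)%:R * Num.max (lin h (x t) + h_b h + eps) 0).

Lemma feas_sok {R : realType} {N D : nat} (x : 'I_N -> 'rV[R]_D) (eps : R) M beta Ci Cj h :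
  sep_feasible x eps M beta Ci Cj h -> sok M beta h.
Proof. rewrite /sep_feasible /sok. move=> [_ [_ [_ [a [b [c e]]]]]]. split; [exact a|split; [exact b|split; [exact c|exact e]]]. Qed.

Lemma lin_tighten {R : realType} {N D : nat} (x : 'I_N -> 'rV[R]_D) (eps : R) Ci h v :
  lin (tighten x eps Ci h) v = lin h v.
Proof. by []. Qed.

Lemma tighten_feas {R : realType} {N D : nat} (x : 'I_N -> 'rV[R]_D) (eps : R) M beta
   (Ci Cj : pred 'I_N) h :
  (forall t, Ci t -> Cj t -> False) -> sok M beta h ->
  sep_feasible x eps M beta Ci Cj (tighten x eps Ci h).
Proof.
move=> dis [h1 [h2 [h3 h4]]]; split; [|split; [|split]]; last by split; [exact h1|split;[exact h2|split;[exact h3|exact h4]]].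
- move=> t ct /=; rewrite ct lin_tighten lerNl le_max lexx //.
- move=> t ct /=; rewrite lin_tighten; have -> : Ci t = false by apply/negP => ci; exact: dis t ci ct.
  by rewrite le_max lexx.
- by move=> t _ /=; case: (Ci t); rewrite le_max lexx orbT.
Qed.

Lemma pv_split {R : realType} {N D : nat} (x : 'I_N -> 'rV[R]_D) (eps : R)
   (Ci Cj : pred 'I_N) h :
  pv x eps Ci Cj h = \sum_(t < N | Ci t || Cj t)
     ((Ci t)%:R * Num.max (- (lin h (x t) + h_b h)) 0
              + (Cj t)%:R * Num.max (lin h (x t) + h_b h + eps) 0).
Proof.
rewrite /pv (bigID (fun t => Ci t || Cj t)) /= [X in _ + X]big1 ?addr0 //.
by move=> t; rewrite negb_or => /andP[/negbTE -> /negbTE ->]; rewrite !mul0r addr0.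
Qed.

Lemma pv_le_sep {R : realType} {N D : nat} (x : 'I_N -> 'rV[R]_D) (eps : R) M beta
   (Ci Cj : pred 'I_N) h :
  (forall t, Ci t -> Cj t -> False) -> sep_feasible x eps M beta Ci Cj h ->
  pv x eps Ci Cj h <= sep_obj Ci Cj h.
Proof.
move=> dis [f1 [f2 [f3 _]]]; rewrite pv_split /sep_obj; apply: ler_sum => t hij.
have x0 := f3 t hij.
case ci: (Ci t).
  have -> : Cj t = false by apply/negP => cj; exact: dis t ci cj.
  by rewrite mul1r mul0r addr0 ge_max x0 andbT lerNl f1.
move: hij; rewrite ci /= => cj; rewrite cj mul0r add0r mul1r ge_max x0 andbT f2 //.
Qed.

Lemma sep_tight {R : realType} {N D : nat} (x : 'I_N -> 'rV[R]_D) (eps : R)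
   (Ci Cj : pred 'I_N) h :
  (forall t, Ci t -> Cj t -> False) ->
  sep_obj Ci Cj (tighten x eps Ci h) = pv x eps Ci Cj h.
Proof.
move=> dis; rewrite pv_split /sep_obj; apply: eq_bigr => t hij /=.
case ci: (Ci t).
  have -> : Cj t = false by apply/negP => cj; exact: dis t ci cj.
  by rewrite mul1r mul0r addr0.
by move: hij; rewrite ci /= => ->; rewrite mul0r add0r mul1r.
Qed.

Lemma pair_le {R : realType} {N D : nat} (x : 'I_N -> 'rV[R]_D) (eps : R) M beta
   (Ci Cj : pred 'I_N) h h' :
  (forall t, Ci t -> Cj t -> False) -> sep_optimal x eps M beta Ci Cj h ->
  sok M beta h' -> pv x eps Ci Cj h <= pv x eps Ci Cj h'.
Proof.
move=> dis [fh oh] sk.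
apply: le_trans (pv_le_sep x eps M beta Ci Cj h dis fh) _.
rewrite -(sep_tight x eps Ci Cj h' dis); apply: oh; exact: tighten_feas.
Qed.
Lemma scalar_mean {R : realType} {N : nat} (A : {set 'I_N}) (a : 'I_N -> R) (c : R) :
  \sum_(t in A) (a t - (#|A|%:R)^-1 * \sum_(t in A) a t) ^+ 2 <= \sum_(t in A) (a t - c) ^+ 2.
Proof.
set m := (#|A|%:R)^-1 * \sum_(t in A) a t.
have [/cards0_eq -> | nz] := eqVneq #|A| 0%N.
  by rewrite !big_set0.
rewrite -subr_ge0 -sumrB.
have -> : \sum_(t in A) ((a t - c) ^+ 2 - (a t - m) ^+ 2)
   = \sum_(t in A) ((m - c) * 2 * a t - (m - c) * (m + c)).
  by apply: eq_bigr => t _; ring.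
rewrite sumrB -mulr_sumr sumr_const.
have hS : \sum_(t in A) a t = #|A|%:R * m.
  rewrite /m mulrA divff ?mul1r //.
  by rewrite pnatr_eq0.
rewrite hS -[_ *+ #|A|]mulr_natr.
have h : 0 <= #|A|%:R * (m - c) ^+ 2 by apply: mulr_ge0 => //; rewrite sqr_ge0.
apply: le_trans h _; rewrite le_eqVlt; apply/orP; left; apply/eqP; ring.
Qed.

Lemma sum_ind {R : realType} {N : nat} (P : pred 'I_N) (f : 'I_N -> R) :
  \sum_(t < N) (P t)%:R * f t = \sum_(t in [set t | P t]) f t.
Proof.
rewrite [RHS]big_mkcond /=; apply: eq_bigr => t _.
by rewrite inE; case: (P t); rewrite ?mul1r ?mul0r.
Qed.

Lemma centroid_opt {R : realType} {N D K : nat} (x : 'I_N -> 'rV[R]_D) lam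
  (z : 'I_N -> 'I_K) (c : 'I_K -> 'rV[R]_D) xp xm :
  obj x lam z (centroid x z) xp xm <= obj x lam z c xp xm.
Proof.
rewrite /obj lerD2r; apply: ler_sum => k _.
rewrite !(sum_ind (fun t => z t == k)) /sqn.
rewrite (exchange_big _ _ _ _ _ (fun t d => ((x t - centroid x z k) 0 d) ^+ 2)).
rewrite (exchange_big _ _ _ _ _ (fun t d => ((x t - c k) 0 d) ^+ 2)) /=.
apply: ler_sum => d _.
have := scalar_mean [set t | z t == k] (fun t => x t 0 d) (c k 0 d).
congr (_ <= _); apply: eq_bigr => t _; rewrite ?mxE //.
rewrite summxE /csize; congr ((_ - (_ * _)) ^+ 2).
by rewrite big_mkcond [RHS]big_mkcond; apply: eq_bigr => i _; rewrite inE.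
Qed.

Definition allopt {R : realType} {N D K : nat} (x : 'I_N -> 'rV[R]_D) (eps : R) M beta
   (z : 'I_N -> 'I_K) (H : 'I_K -> 'I_K -> @hsol R N D) : Prop :=
  forall i j : 'I_K, (i < j)%N ->
    sep_optimal x eps M beta (cluster z i) (cluster z j) (H i j).

Definition allsok {R : realType} {N D K : nat} M beta
   (H : 'I_K -> 'I_K -> @hsol R N D) : Prop :=
  forall i j : 'I_K, (i < j)%N -> sok M beta (H i j).

Lemma allopt_sok {R : realType} {N D K : nat} (x : 'I_N -> 'rV[R]_D) (eps : R) M beta
   (z : 'I_N -> 'I_K) H : allopt x eps M beta z H -> allsok M beta H.
Proof. by move=> ho i j lij; have [f _] := ho i j lij; exact: feas_sok f. Qed.

Lemma Pform {R : realType} {N D K : nat} (x : 'I_N -> 'rV[R]_D) (eps : R)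
   (z : 'I_N -> 'I_K) (H : 'I_K -> 'I_K -> @hsol R N D) :
  \sum_(t < N) \sum_(i < K) \sum_(j < K | (i < j)%N)
     ((z t == i)%:R * new_xp x H i j t + (z t == j)%:R * new_xm x eps H i j t)
  = \sum_(i < K) \sum_(j < K | (i < j)%N) pv x eps (cluster z i) (cluster z j) (H i j).
Proof.
rewrite exchange_big; apply: eq_bigr => i _.
by rewrite exchange_big; apply: eq_bigr => j _.
Qed.

Lemma obj_H_le {R : realType} {N D K : nat} (x : 'I_N -> 'rV[R]_D) (lam eps : R) M beta
   (hlam : 0 <= lam) (z : 'I_N -> 'I_K) c H H' :
  allopt x eps M beta z H -> allsok M beta H' ->
  obj x lam z c (new_xp x H) (new_xm x eps H) <=
  obj x lam z c (new_xp x H') (new_xm x eps H').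
Proof.
move=> ho hs; rewrite /obj lerD2l; apply: ler_wpM2l => //.
rewrite !Pform; apply: ler_sum => i _; apply: ler_sum => j lij.
apply: pair_le; [|exact: ho|exact: hs].
move=> t; rewrite /cluster => /eqP -> /eqP eij.
by move: lij; rewrite eij ltnn.
Qed.

Lemma obj_H_eq {R : realType} {N D K : nat} (x : 'I_N -> 'rV[R]_D) (lam eps : R) M beta
   (hlam : 0 <= lam) (z : 'I_N -> 'I_K) c H H' :
  allopt x eps M beta z H -> allopt x eps M beta z H' ->
  obj x lam z c (new_xp x H) (new_xm x eps H) =
  obj x lam z c (new_xp x H') (new_xm x eps H').
Proof.
move=> h h'; apply/le_anti; apply/andP; split.
  exact: (obj_H_le _ _ _ _ _ hlam _ _ _ _ h (allopt_sok _ _ _ _ _ _ h')).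
exact: (obj_H_le _ _ _ _ _ hlam _ _ _ _ h' (allopt_sok _ _ _ _ _ _ h)).
Qed.

Definition pb (P : Prop) : bool := if excluded_middle_informative P then true else false.
Lemma pbE (P : Prop) : pb P <-> P.
Proof. by rewrite /pb; case: excluded_middle_informative. Qed.

Definition mono {R : realType} (h : seq R) : Prop :=
  forall l, (1 <= l)%N -> (l.+1 < size h)%N -> nth 0 h l.+1 <= nth 0 h l.

Lemma mono_rcons {R : realType} (h : seq R) v :
  mono h -> ((2 <= size h)%N -> v <= last 0 h) -> mono (rcons h v).
Proof.
move=> mh hv l l1; rewrite size_rcons ltnS => ls.
rewrite !nth_rcons ls.
case: ltnP => [lt|ge]; first exact: mh.
have el : l.+1 = size h by apply/eqP; rewrite eqn_leq ls ge.
rewrite el eqxx; have -> : l = (size h).-1 by rewrite -el.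
rewrite nth_last; apply: hv; by rewrite -el.
Qed.

Lemma ffz {N K : nat} (z : 'I_N -> 'I_K) : fun_of_fin [ffun t => z t] = z.
Proof. by apply: functional_extensionality => t; rewrite ffunE. Qed.

Lemma card_le_pred {T : finType} (P Q : pred T) :
  (forall f, P f -> Q f) -> (#|[set f | P f]| <= #|[set f | Q f]|)%N.
Proof. by move=> hPQ; apply: subset_leq_card; apply/subsetP => f; rewrite !inE; apply: hPQ. Qed.

Lemma card_lt_pred {T : finType} (P Q : pred T) f0 :
  (forall f, P f -> Q f) -> Q f0 -> ~~ P f0 ->
  (#|[set f | P f]| < #|[set f | Q f]|)%N.
Proof.
move=> hPQ q0 p0; apply: proper_card; apply/properP; split.
  by apply/subsetP => f; rewrite !inE; apply: hPQ.
by exists f0; rewrite !inE.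
Qed.

Lemma card_set_le {T : finType} (P : pred T) : (#|[set f | P f]| <= #|T|)%N.
Proof. exact: max_card. Qed.

Section Main.
Context {R : realType} {N D K : nat}.
Variables (x : 'I_N -> 'rV[R]_D) (Nmin Nmax : nat) (lam eps : R) (M beta : nat).

Definition objH (z : 'I_N -> 'I_K) (H : 'I_K -> 'I_K -> @hsol R N D) : R :=
  obj x lam z (centroid x z) (new_xp x H) (new_xm x eps H).

Definition Good (s : @astate R N D K) : Prop :=
  mono (st_hist s) /\
  match st_phase s with
  | PhDone => True
  | PhInner =>
     st_c s = centroid x (st_z s) /\ feasible_z Nmin Nmax (st_z s) /\
     ((1 <= size (st_hist s))%N -> exists Hc, allsok M beta Hc /\
         st_xp s = new_xp x Hc /\ st_xm s = new_xm x eps Hc) /\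
     ((2 <= size (st_hist s))%N -> exists zg Hg, allopt x eps M beta zg Hg /\
         obj x lam (st_z s) (st_c s) (st_xp s) (st_xm s) <= objH zg Hg /\
         objH zg Hg <= last 0 (st_hist s))
  | PhHyper =>
     st_c s = centroid x (st_z s) /\ feasible_z Nmin Nmax (st_z s) /\
     st_hist s <> [::] /\
     last 0 (st_hist s) = obj x lam (st_z s) (st_c s) (st_xp s) (st_xm s) /\
     ((2 <= size (st_hist s))%N -> exists Hc, allsok M beta Hc /\
         st_xp s = new_xp x Hc /\ st_xm s = new_xm x eps Hc)
  end.

Definition B := #|{ffun 'I_N -> 'I_K}|.

Definition cntlt (v : R) := #|[set f : {ffun 'I_N -> 'I_K} |
   pb (exists H, allopt x eps M beta f H /\ objH f H < v)]|.
Definition cntle (v : R) := #|[set f : {ffun 'I_N -> 'I_K} |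
   pb (exists H, allopt x eps M beta f H /\ objH f H <= v)]|.
Definition Rk v := (cntlt v + cntle v)%N.

Definition inner (s : @astate R N D K) := #|[set f : {ffun 'I_N -> 'I_K} |
   obj x lam f (centroid x f) (st_xp s) (st_xm s) <
   obj x lam (st_z s) (st_c s) (st_xp s) (st_xm s)]|.

Definition CC := (4 * B + 1)%N.

Definition outer (s : @astate R N D K) : nat :=
  match st_phase s with
  | PhDone => 0
  | PhInner => match size (st_hist s) with
      | 0 => CC + 3 | 1 => CC + 1 | _ => 2 * Rk (last 0%R (st_hist s)) end
  | PhHyper => match size (st_hist s) with
      | 0 => 0 | 1 => CC + 2 | _ => 2 * Rk (last 0%R (st_hist s)) + 1 end
  end%N.

Definition mu s := (outer s * B.+1 + inner s)%N.

Lemma inner_le s : (inner s <= B)%N.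
Proof. exact: card_set_le. Qed.

Lemma Rk_le v : (Rk v <= 2 * B)%N.
Proof. by rewrite /Rk /cntlt /cntle mul2n -addnn leq_add // card_set_le. Qed.

Lemma mu_lt s s' : (outer s' < outer s)%N -> (mu s' < mu s)%N.
Proof. move=> h; have := inner_le s'; rewrite /mu; nia. Qed.


Lemma Rk_lt (hlam : 0 <= lam) v L zg Hg :
  v < L -> allopt x eps M beta zg Hg -> v <= objH zg Hg -> objH zg Hg <= L ->
  (Rk v < Rk L)%N.
Proof.
move=> vL ho h1 h2.
have uniq H : allopt x eps M beta zg H -> objH zg H = objH zg Hg.
  move=> hH; exact: (obj_H_eq _ _ _ _ _ hlam _ _ _ _ hH ho).
have mlt : (cntlt v <= cntlt L)%N.
  apply: card_le_pred => f /pbE [H [hH hv]]; apply/pbE; exists H; split => //.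
  exact: lt_trans hv vL.
have mle : (cntle v <= cntle L)%N.
  apply: card_le_pred => f /pbE [H [hH hv]]; apply/pbE; exists H; split => //.
  exact: le_trans hv (ltW vL).
have [glt|geq] : objH zg Hg < L \/ objH zg Hg = L.
  by move: h2; rewrite le_eqVlt => /orP [/eqP ->|->]; [right|left].
- have s : (cntlt v < cntlt L)%N.
    rewrite /cntlt /cntle; apply: (card_lt_pred _ _ [ffun t => zg t]).
    + move=> f /pbE [H [hH hv]]; apply/pbE; exists H; split => //.
      exact: lt_trans hv vL.
    + by apply/pbE; exists Hg; rewrite ffz.
    + apply/negP => /pbE [H []]; rewrite ffz => hH; rewrite (uniq H hH).
      by rewrite ltNge h1.
  by rewrite /Rk; lia.
- have s : (cntle v < cntle L)%N.
    rewrite /cntlt /cntle; apply: (card_lt_pred _ _ [ffun t => zg t]).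
    + move=> f /pbE [H [hH hv]]; apply/pbE; exists H; split => //.
      exact: le_trans hv (ltW vL).
    + by apply/pbE; exists Hg; rewrite ffz geq.
    + apply/negP => /pbE [H []]; rewrite ffz => hH; rewrite (uniq H hH) geq.
      by rewrite leNgt vL.
  by rewrite /Rk; lia.
Qed.


Lemma step_dec (hlam : 0 <= lam) s s' : Good s -> step x Nmin Nmax lam eps M beta s s' ->
  Good s' /\ (st_phase s' = PhDone \/ (mu s' < mu s)%N).
Proof.
move=> [mh G] st; case: st G mh.
-
  move=> s0 z' hp ho hne G mh; rewrite hp in G.
  case: G => hc [hf [h1 h2]].
  have le1 : obj x lam z' (centroid x z') (st_xp s0) (st_xm s0) <=
             obj x lam (st_z s0) (st_c s0) (st_xp s0) (st_xm s0).
    exact: le_trans (centroid_opt x lam z' (st_c s0) _ _) (ho.2 _ hf).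
  have lt1 : obj x lam z' (centroid x z') (st_xp s0) (st_xm s0) <
             obj x lam (st_z s0) (st_c s0) (st_xp s0) (st_xm s0).
    by rewrite lt_neqAle le1 andbT; apply/eqP.
  split.
    split => //=; split => //; split; first exact: ho.1.
    split => // /h2 [zg [Hg [a [b c]]]]; exists zg, Hg; split => //; split => //.
    exact: le_trans le1 b.
  right; rewrite /mu /outer /= hp ltn_add2l.
  rewrite /inner /=; apply: (card_lt_pred _ _ [ffun t => z' t]).
  + by move=> f hf'; exact: lt_trans hf' lt1.
  + by rewrite ffz.
  + by rewrite ffz ltxx.
-
  move=> s0 z' hp ho heq hne hlast G mh.
  split; last by left.
  split => //=; apply: mono_rcons => // _; by rewrite hlast.
-
  move=> s0 z' hp ho heq hng G mh; rewrite hp in G.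
  case: G => hc [hf [h1 h2]].
  split.
    split => /=.
      apply: mono_rcons => // /h2 [zg [Hg [a [b c]]]].
      by rewrite heq; exact: le_trans b c.
    split => //; split; first exact: ho.1.
    split; first by case: (st_hist s0).
    split; first by rewrite last_rcons.
    by rewrite size_rcons ltnS => /h1.
  right; apply: mu_lt; rewrite /outer /= hp size_rcons last_rcons.
  case E: (size (st_hist s0)) => [|[|n]].
  + by rewrite ltn_add2l.
  + by have := Rk_le (obj x lam z' (centroid x z') (st_xp s0) (st_xm s0)); rewrite /CC; lia.
  + have E2 : (2 <= size (st_hist s0))%N by rewrite E.
    have [zg [Hg [a [b c]]]] := h2 E2.
    set v := obj x lam z' (centroid x z') (st_xp s0) (st_xm s0).
    have vL : v < last 0 (st_hist s0).
      rewrite lt_neqAle (le_trans _ c) ?andbT; last by rewrite /v heq.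
      apply/eqP => e; apply: hng; split; last by rewrite -e.
      by move=> en; rewrite en in E.
    have b' : v <= objH zg Hg by rewrite /v heq.
    have h := Rk_lt hlam _ _ _ _ vL a b' c; rewrite !mul2n addn1 -doubleS leq_double; exact: h.
-
  move=> s0 H hp ho G mh; rewrite hp in G.
  case: G => hc [hf [hne [hlast h2]]].
  split.
    split => //=; split => //; split => //; split.
      by move=> _; exists H; split => //; exact: allopt_sok ho.
    move=> /h2 [Hc [hs [exp exm]]]; exists (st_z s0), H; split => //; split.
      by rewrite /objH hc.
    rewrite hlast exp exm /objH -hc.
    exact: (obj_H_le _ _ _ _ _ hlam _ _ _ _ ho hs).
  right; apply: mu_lt; rewrite /outer /= hp.
  case E: (size (st_hist s0)) => [|[|n]] //.
  + by move/size0nil: E.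
  + by rewrite ltn_add2l.
  + by rewrite addn1.
Qed.


Lemma init_good s s' : st_phase s = PhInner -> st_hist s = [::] ->
  step x Nmin Nmax lam eps M beta s s' -> Good s'.
Proof.
move=> hp hh st; case: st hp hh.
- move=> s0 z' _ ho _ _ hh; split => /=; first by rewrite hh => l _.
  split => //; split; first exact: ho.1.
  by rewrite hh.
- by move=> s0 z' _ _ _ hne _ _ hh.
- move=> s0 z' _ ho _ _ _ hh; split => /=.
    by rewrite hh => l l1.
  split => //; split; first exact: ho.1.
  by rewrite hh.
- by move=> s0 H -> .
Qed.

Lemma acc_done (s : @astate R N D K) : st_phase s = PhDone ->
  Acc (fun s' s => step x Nmin Nmax lam eps M beta s s') s.
Proof.
move=> hd; constructor => s' st; move: st hd.
by case=> [s0 z' -> | s0 z' -> | s0 z' -> | s0 H ->].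
Qed.

Lemma acc_good (hlam : 0 <= lam) n : forall s : @astate R N D K, Good s -> (mu s < n)%N ->
  Acc (fun s' s => step x Nmin Nmax lam eps M beta s s') s.
Proof.
elim: n => [//|n IH] s g hn; constructor => s' st.
have [g' [d|lt]] := step_dec hlam _ _ g st; first exact: acc_done.
by apply: IH g' _; rewrite -ltnS; exact: leq_trans lt hn.
Qed.

End Main.

Theorem theorem2 (R : realType) (N D K : nat) (x : 'I_N -> 'rV[R]_D)
    (Nmin Nmax : nat) (lam eps : R) (M beta : nat)
    (hlam : 0 <= lam) (heps : 0 < eps) (hM : (1 < M)%N)
    (z0 : 'I_N -> 'I_K) (c0 : 'I_K -> 'rV[R]_D) :
  (forall s, clos_refl_trans _ (step x Nmin Nmax lam eps M beta)
               (init_state z0 c0) s ->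
     forall l : nat, (1 <= l)%N -> (l.+1 < size (st_hist s))%N ->
       nth 0 (st_hist s) l.+1 <= nth 0 (st_hist s) l)
  /\
  Acc (fun s' s => step x Nmin Nmax lam eps M beta s s') (init_state z0 c0).
Proof.
split.
  move=> s /clos_rt_rtn1_iff hr.
  have : s = init_state z0 c0 \/ Good x Nmin Nmax lam eps M beta s.
    elim: hr => [|y z st _ [ey|gy]]; first by left.
      by right; rewrite ey in st; exact: (init_good _ _ _ _ _ _ _ _ _ _ _ st).
    by right; have [] := step_dec _ _ _ _ _ _ _ hlam _ _ gy st.
  case=> [-> //|[mh _]]; exact: mh.
constructor => s' st.
apply: (acc_good _ _ _ _ _ _ _ hlam (mu x lam eps M beta s').+1) => //.
exact: (init_good _ _ _ _ _ _ _ _ _ _ _ st).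
Qed.
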